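(* Let $F:\mathbb{R}^d\to\mathbb{R}$ belong to $C^{1,1}(\mathbb{R}^d)$ with Lipschitz constant $L>0$ for its gradient, let $\boldsymbol{\Xi}=(\boldsymbol{\xi}_1,\ldots,\boldsymbol{\xi}_d)$ be an orthonormal basis of $\mathbb{R}^d$, let $\sigma>0$ and $M\ge 1$, and let $C>0$ be a constant such that the Gauss–Hermite quadrature error bound $$\big|\widetilde{\mathscr{D}}^M[G_\sigma(0\,|\,\boldsymbol x,\boldsymbol\xi_i)]-\mathscr{D}[G_\sigma(0\,|\,\boldsymbol x,\boldsymbol\xi_i)]\big|\le C\,\frac{M!\,\sqrt{\pi}}{2^M\,(2M)!}\,\sigma^{2M-1}$$ holds for all $i\in\{1,\ldots,d\}$ at the point $\boldsymbol x\in\mathbb{R}^d$. Then $$\big\|\widetilde{\nabla}^M_{\sigma,\boldsymbol\Xi}[F](\boldsymbol x)-\nabla F(\boldsymbol x)\big\|^2\le \frac{2C^2\pi d\,(M!)^2}{4^M((2M)!)^2}\,\sigma^{4M-2}+32\,d\,L^2\sigma^2 .$$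
   Context: $F\in C^{1,1}(\mathbb{R}^d)$ means there is $L>0$ with $\|\nabla F(\boldsymbol x+\boldsymbol\xi)-\nabla F(\boldsymbol x)\|\le L\|\boldsymbol\xi\|$ for all $\boldsymbol x,\boldsymbol\xi\in\mathbb{R}^d$; $\|\cdot\|$ is the Euclidean norm. For $\boldsymbol x\in\mathbb{R}^d$ and a unit vector $\boldsymbol\xi$, set $G(y\,|\,\boldsymbol x,\boldsymbol\xi)=F(\boldsymbol x+y\boldsymbol\xi)$ for $y\in\mathbb{R}$, and $G_\sigma(y\,|\,\boldsymbol x,\boldsymbol\xi)=\mathbb{E}_{v\sim\mathcal N(0,1)}[G(y+\sigma v\,|\,\boldsymbol x,\boldsymbol\xi)]$. Its derivative at $0$ is $\mathscr{D}[G_\sigma(0\,|\,\boldsymbol x,\boldsymbol\xi)]=\frac1\sigma\mathbb{E}_{v\sim\mathcal N(0,1)}[G(\sigma v\,|\,\boldsymbol x,\boldsymbol\xi)\,v]$. The Gauss–Hermite estimator is $\widetilde{\mathscr{D}}^M[G_\sigma(0\,|\,\boldsymbol x,\boldsymbol\xi)]=\frac{1}{\sqrt\pi\,\sigma}\sum_{m=1}^M w_m F(\boldsymbol x+\sqrt2\sigma v_m\boldsymbol\xi)\sqrt2 v_m$, where $v_1,\ldots,v_M$ are the roots of the $M$-th Hermite polynomial $H_M$ (physicists' convention, weight $e^{-v^2}$) and $w_m$ the corresponding Gauss–Hermite quadrature weights. The DGS estimator is $\widetilde{\nabla}^M_{\sigma,\boldsymbol\Xi}[F](\boldsymbol x)=\sum_{i=1}^d\widetilde{\mathscr{D}}^M[G_\sigma(0\,|\,\boldsymbol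 x,\boldsymbol\xi_i)]\,\boldsymbol\xi_i$. *)

(* Defs.v *)
From mathcomp Require Import ssreflect ssrfun ssrbool eqtype ssrnat seq fintype bigop.
From Stdlib Require Import Reals Factorial.
Open Scope R_scope.

Definition vec (d : nat) := 'I_d -> R.

Definition vadd {d} (x y : vec d) : vec d := fun k => x k + y k.
Definition vsub {d} (x y : vec d) : vec d := fun k => x k - y k.
Definition vscale {d} (a : R) (x : vec d) : vec d := fun k => a * x k.

Definition rsum (n : nat) (f : 'I_n -> R) : R := \big[Rplus/0]_(i < n) f i.

Definition inner {d} (x y : vec d) : R := rsum d (fun k => x k * y k).
Definition vnorm {d} (x : vec d) : R := sqrt (inner x x).

(* Xi = (xi_1, ..., xi_d) is an orthonormal family of d vectors of R^d
   (hence an orthonormal basis). *)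
Definition orthonormal {d} (xi : 'I_d -> vec d) : Prop :=
  forall i j : 'I_d, inner (xi i) (xi j) = if i == j then 1 else 0.

Definition is_gradient {d} (F : vec d -> R) (gF : vec d -> vec d) : Prop :=
  forall x : vec d, forall eps : R, 0 < eps -> exists delta : R, 0 < delta /\
    forall h : vec d, vnorm h < delta ->
      Rabs (F (vadd x h) - F x - inner (gF x) h) <= eps * vnorm h.

Definition grad_lipschitz {d} (gF : vec d -> vec d) (L : R) : Prop :=
  forall x h : vec d, vnorm (vsub (gF (vadd x h)) (gF x)) <= L * vnorm h.

Definition improper_int (f : R -> R) (l : R) : Prop :=
  exists pr : (forall a b : R, Riemann_integrable f a b),
    forall eps : R, 0 < eps -> exists N : R, forall a b : R,
      N <= a -> N <= b -> Rabs (RiemannInt (pr (- a) b) - l) < eps.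

Definition gauss_expect (g : R -> R) (e : R) : Prop :=
  improper_int (fun v => g v * (exp (- (v ^ 2) / 2) / sqrt (2 * PI))) e.

Definition Gdir {d} (F : vec d -> R) (x xi : vec d) (y : R) : R :=
  F (vadd x (vscale y xi)).

Definition is_smoothed_dirderiv {d} (F : vec d -> R) (x xi : vec d)
  (sigma D : R) : Prop :=
  exists e : R, gauss_expect (fun v => Gdir F x xi (sigma * v) * v) e /\
    D = / sigma * e.

(* Physicists' Hermite polynomials: H_0 = 1, H_1 = 2t,
   H_{n+1} = 2 t H_n - 2 n H_{n-1}.  hermite_pair n t = (H_n t, H_{n+1} t). *)
Fixpoint hermite_pair (n : nat) (t : R) : R * R :=
  match n with
  | O => (1, 2 * t)
  | S n' => let (a, b) := hermite_pair n' t in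
            (b, 2 * t * b - 2 * INR (S n') * a)
  end.
Definition hermite (n : nat) (t : R) : R := fst (hermite_pair n t).

(* v : 'I_M -> R enumerates the M roots of H_M (M distinct roots, hence all) *)
Definition GH_nodes (M : nat) (v : 'I_M -> R) : Prop :=
  injective v /\ forall m : 'I_M, hermite M (v m) = 0.

(* Gauss-Hermite weight (weight function e^{-t^2}) at the node t:
   w = 2^{M-1} M! sqrt(pi) / (M^2 H_{M-1}(t)^2) *)
Definition GH_weight (M : nat) (t : R) : R :=
  2 ^ (M - 1)%nat * INR (fact M) * sqrt PI / (INR M ^ 2 * (hermite (M - 1)%nat t) ^ 2).

Definition GH_est {d} (F : vec d -> R) (x xi : vec d) (sigma : R)
  (M : nat) (v : 'I_M -> R) : R :=
  / (sqrt PI * sigma) *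
  rsum M (fun m => GH_weight M (v m) * F (vadd x (vscale (sqrt 2 * sigma * v m) xi))
                    * (sqrt 2 * v m)).

Definition DGS {d} (F : vec d -> R) (x : vec d) (sigma : R) (M : nat)
  (v : 'I_M -> R) (xi : 'I_d -> vec d) : vec d :=
  fun k => rsum d (fun i => GH_est F x (xi i) sigma M v * xi i k).

(* Main.v *)
Require Import Defs.
From HB Require Import structures.
From mathcomp Require Import ssreflect ssrfun ssrbool eqtype ssrnat seq fintype bigop.
From Stdlib Require Import Reals Factorial Lra Lia Psatz FunctionalExtensionality.
From Coquelicot Require Import Coquelicot.
From mathcomp Require Import ssralg matrix Rstruct.
Open Scope R_scope.


Ltac Rring := match goal with |- ?a = ?b => change (@eq R a b); ring end.
Ltac Rfield := match goal with |- ?a = ?b => change (@eq R a b); field end.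

Definition gg (t : R) := exp (- (t ^ 2)).
Definition uu (x t : R) := exp (- (x ^ 2 * (1 + t ^ 2))) / (1 + t ^ 2).
Definition II (X : R) := RInt gg 0 X.
Definition JJ (X : R) := RInt (uu X) 0 1.

Lemma one_sq_pos t : 0 < 1 + t ^ 2.
Proof. nra. Qed.

Lemma gg_cont t : continuous gg t.
Proof. apply: ex_derive_continuous; rewrite /gg; auto_derive; done. Qed.

Lemma ex_RInt_gg a b : ex_RInt gg a b.
Proof. apply: ex_RInt_continuous => z _; apply gg_cont. Qed.

Lemma uu_cont x t : continuous (uu x) t.
Proof.
apply: ex_derive_continuous; rewrite /uu; auto_derive.
have := one_sq_pos t; lra.
Qed.

Lemma II_deriv x : is_derive II x (gg x).
Proof.
apply: is_derive_RInt; last by apply gg_cont.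
apply: filter_forall => y; apply: RInt_correct; apply ex_RInt_gg.
Qed.

Lemma dpart x t : is_derive (fun z => uu z t) x (- (2 * x) * exp (- (x ^ 2 * (1 + t ^ 2)))).
Proof.
rewrite /uu; auto_derive.
  have := one_sq_pos t; lra.
have := one_sq_pos t => H.
rewrite (_ : x * (x * 1) * (1 + t * (t * 1)) = x ^ 2 * (1 + t ^ 2)); last ring.
field; nra.
Qed.

Lemma exp_cont_pt y : continuity_pt exp y.
Proof. apply derivable_continuous_pt, derivable_pt_exp. Qed.

Lemma dpart_cont x t :
  continuity_2d_pt (fun u v => Derive (fun z => uu z v) u) x t.
Proof.
apply (continuity_2d_pt_ext (fun u v => - (2 * u) * exp (- (u * u * (1 + v * v))))).
  move=> u v; rewrite (is_derive_unique _ _ _ (dpart u v)).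
  by rewrite /= !Rmult_1_r.
apply continuity_2d_pt_mult.
  apply continuity_2d_pt_opp, continuity_2d_pt_mult.
    apply continuity_2d_pt_const.
  apply continuity_2d_pt_id1.
apply (continuity_1d_2d_pt_comp exp (fun u v => - (u * u * (1 + v * v)))).
  apply exp_cont_pt.
apply continuity_2d_pt_opp, continuity_2d_pt_mult.
  apply continuity_2d_pt_mult; apply continuity_2d_pt_id1.
apply continuity_2d_pt_plus; first apply continuity_2d_pt_const.
apply continuity_2d_pt_mult; apply continuity_2d_pt_id2.
Qed.

Lemma JJ_deriv x : is_derive JJ x (- (2) * gg x * II x).
Proof.
have H : is_derive (fun x0 => RInt (fun t => uu x0 t) 0 1) x
    (RInt (fun t => Derive (fun u => uu u t) x) 0 1).
  apply is_derive_RInt_param.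
  - apply: filter_forall => y t _; eexists; apply dpart.
  - move=> t _; apply dpart_cont.
  - apply: filter_forall => y; apply: ex_RInt_continuous => z _; apply uu_cont.
have E : RInt (fun t => Derive (fun u => uu u t) x) 0 1 = - (2) * gg x * II x.
  transitivity (RInt (fun t => scal (- (2) * gg x) (scal x (gg (x * t + 0)))) 0 1).
    apply RInt_ext => t _; rewrite (is_derive_unique _ _ _ (dpart x t)) /gg.
    replace (exp (- (x ^ 2 * (1 + t ^ 2)))) with (exp (- (x ^ 2)) * exp (- ((x * t + 0) ^ 2))).
      rewrite /scal /= /mult /=; ring.
    rewrite -exp_plus; f_equal; ring.
  rewrite RInt_scal; last first.
    apply: ex_RInt_scal; apply: ex_RInt_continuous => z _.
    apply: (continuous_comp (fun t => x * t + 0) gg); last apply gg_cont.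
    apply: ex_derive_continuous; auto_derive; done.
  rewrite RInt_comp_lin; last apply ex_RInt_gg.
  rewrite /II (_ : x * 0 + 0 = 0); last ring.
  rewrite (_ : x * 1 + 0 = x); last ring.
  rewrite /scal /= /mult /=; ring.
by rewrite -E.
Qed.


Lemma HH_deriv y : derivable_pt_lim (fun x => JJ x + II x * II x) y 0.
Proof.
apply is_derive_Reals.
have H := is_derive_plus _ _ _ _ _ (JJ_deriv y) (is_derive_mult _ _ _ _ _ (II_deriv y) (II_deriv y) Rmult_comm).
have Hv : plus (- (2) * gg y * II y) (plus (mult (gg y) (II y)) (mult (II y) (gg y))) = 0.
  rewrite /plus /mult /=; ring.
by rewrite Hv in H.
Qed.

Lemma JJ0 : JJ 0 = PI / 4.
Proof.
rewrite /JJ.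
rewrite (RInt_ext _ (fun t => / (1 + t ^ 2))); last first.
  move=> t _; rewrite /uu (_ : - (0 ^ 2 * (1 + t ^ 2)) = 0); last ring.
  by rewrite exp_0 /Rdiv Rmult_1_l.
rewrite (is_RInt_unique _ _ _ (minus (atan 1) (atan 0))).
  rewrite atan_1 atan_0 /minus /plus /opp /=; ring.
apply: is_RInt_derive => t _.
  apply is_derive_Reals, derivable_pt_lim_atan.
apply: ex_derive_continuous; auto_derive; have := one_sq_pos t; lra.
Qed.

Lemma HH_const X : JJ X + II X * II X = PI / 4.
Proof.
have H0 : JJ 0 + II 0 * II 0 = PI / 4.
  by rewrite JJ0 /II RInt_point /zero /=; ring.
case: (Rtotal_order 0 X) => [HX|[<- //|HX]].
  have [c [Hc _]] := MVT_cor2 (fun x => JJ x + II x * II x) (fun _ => 0) 0 X HX (fun c _ => HH_deriv c).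
  lra.
have [c [Hc _]] := MVT_cor2 (fun x => JJ x + II x * II x) (fun _ => 0) X 0 HX (fun c _ => HH_deriv c).
lra.
Qed.

Lemma exp_le a b : a <= b -> exp a <= exp b.
Proof. move=> H; case: (Rle_lt_or_eq_dec _ _ H) => [/exp_increasing|->]; lra. Qed.

Lemma gg_pos t : 0 < gg t.
Proof. apply exp_pos. Qed.

Lemma gg_bound X : gg X <= / (1 + X ^ 2).
Proof.
rewrite /gg exp_Ropp; apply Rinv_le_contravar; first apply one_sq_pos.
apply exp_ineq1_le.
Qed.

Lemma II_ge0 X : 0 <= X -> 0 <= II X.
Proof.
move=> HX; apply RInt_ge_0 => //; first apply ex_RInt_gg.
move=> t _; apply Rlt_le, gg_pos.
Qed.

Lemma JJ_bounds X : 0 <= JJ X <= gg X.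
Proof.
have ex : ex_RInt (uu X) 0 1 by apply: ex_RInt_continuous => z _; apply uu_cont.
split.
  apply RInt_ge_0 => //; first lra.
  move=> t _; rewrite /uu; apply Rlt_le, Rdiv_lt_0_compat; [apply exp_pos|apply one_sq_pos].
apply Rle_trans with (RInt (fun _ => gg X) 0 1).
  apply RInt_le => //; first lra.
    apply ex_RInt_const.
  move=> t Ht; rewrite /uu /gg.
  have H1 : exp (- (X ^ 2 * (1 + t ^ 2))) <= exp (- X ^ 2).
    apply exp_le; have : 0 <= X ^ 2 * t ^ 2 by nra. nra.
  have H2 := one_sq_pos t.
  have H3 : 1 <= 1 + t ^ 2 by nra.
  have H4 := exp_pos (- (X ^ 2 * (1 + t ^ 2))).
  apply Rle_trans with (exp (- (X ^ 2 * (1 + t ^ 2)))); last by [].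
  rewrite /Rdiv -{2}(Rmult_1_r (exp _)); apply Rmult_le_compat_l; first lra.
  rewrite -Rinv_1; apply Rinv_le_contravar; lra.
rewrite RInt_const /scal /= /mult /=; lra.
Qed.

Lemma II_lim X : 0 <= X -> Rabs (II X - sqrt PI / 2) * (sqrt PI / 2) <= / (1 + X ^ 2).
Proof.
move=> HX.
have Hs : 0 < sqrt PI by apply sqrt_lt_R0, PI_RGT_0.
have Hss : sqrt PI * sqrt PI = PI by apply sqrt_sqrt, Rlt_le, PI_RGT_0.
have HI := II_ge0 _ HX.
have [HJ1 HJ2] := JJ_bounds X.
have HC := HH_const X.
have Hg := gg_bound X.
apply Rle_trans with (Rabs (II X - sqrt PI / 2) * (II X + sqrt PI / 2)).
  apply Rmult_le_compat_l; [apply Rabs_pos|lra].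
rewrite -(Rabs_pos_eq (II X + _)); last lra.
rewrite -Rabs_mult.
have -> : (II X - sqrt PI / 2) * (II X + sqrt PI / 2) = - JJ X.
  have : (II X - sqrt PI / 2) * (II X + sqrt PI / 2) = II X * II X - (sqrt PI * sqrt PI) / 4 by field.
  rewrite Hss; lra.
rewrite Rabs_Ropp Rabs_pos_eq; lra.
Qed.

Definition phi0 (v : R) := exp (- (v ^ 2) / 2).

Lemma phi0_pos v : 0 < phi0 v.
Proof. apply exp_pos. Qed.

Lemma phi0_even v : phi0 (- v) = phi0 v.
Proof. by rewrite /phi0 (_ : (- v) ^ 2 = v ^ 2) //; ring. Qed.

Lemma phi0_deriv t : is_derive phi0 t (- t * phi0 t).
Proof.
rewrite /phi0; auto_derive => //.
change (- (t * (t * 1)) * / 2) with (- (t ^ 2) / 2); Rfield.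
Qed.

Lemma G1 a b : RInt (fun v => v * phi0 v) a b = phi0 a - phi0 b.
Proof.
rewrite (is_RInt_unique _ _ _ (minus (- phi0 b) (- phi0 a))).
  rewrite /minus /plus /opp /=; ring.
apply: (is_RInt_derive (fun v => - phi0 v)) => t _.
  have := is_derive_opp _ _ _ (phi0_deriv t); rewrite /opp /=.
  by rewrite (_ : - (- t * phi0 t) = t * phi0 t); last ring.
apply: ex_derive_continuous; rewrite /phi0; auto_derive => //.
Qed.


Lemma phi0_cont t : continuous phi0 t.
Proof. apply: ex_derive_continuous; eexists; apply phi0_deriv. Qed.

Lemma ex_RInt_phi0 a b : ex_RInt phi0 a b.
Proof. apply: ex_RInt_continuous => z _; apply phi0_cont. Qed.

Lemma G2 a b : RInt (fun v => v ^ 2 * phi0 v) a b = RInt phi0 a b + (a * phi0 a - b * phi0 b).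
Proof.
have Hd t : is_derive (fun v => - (v * phi0 v)) t (t ^ 2 * phi0 t - phi0 t).
  have H := is_derive_opp _ _ _ (is_derive_mult _ _ _ _ _ (is_derive_id t) (phi0_deriv t) Rmult_comm).
  rewrite /opp /plus /mult /one /= in H.
  by replace (t ^ 2 * phi0 t - phi0 t) with (- (1 * phi0 t + t * (- t * phi0 t))) by ring.
have Hc t : continuous (fun v => v ^ 2 * phi0 v - phi0 v) t.
  apply: ex_derive_continuous; rewrite /phi0; auto_derive => //.
have H1 : is_RInt (fun v => v ^ 2 * phi0 v - phi0 v) a b (minus (- (b * phi0 b)) (- (a * phi0 a))).
  apply: (is_RInt_derive (fun v => - (v * phi0 v))) => t _; [apply Hd|apply Hc].
have ex2 : ex_RInt (fun v => v ^ 2 * phi0 v - phi0 v) a b by eexists; apply H1.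
have ex3 : ex_RInt (fun v => v ^ 2 * phi0 v) a b.
  apply: ex_RInt_continuous => z _; apply: ex_derive_continuous; rewrite /phi0; auto_derive => //.
have := RInt_minus _ _ _ _ ex3 (ex_RInt_phi0 a b).
move=> H2.
have H3 : RInt (fun x => x ^ 2 * phi0 x + - phi0 x) a b = RInt (fun v => v ^ 2 * phi0 v - phi0 v) a b by [].
rewrite -H3 (is_RInt_unique _ _ _ _ H1) /minus /plus /opp /= in H2.
change (RInt (fun v => v * (v * 1) * phi0 v) a b) with (RInt (fun v => v ^ 2 * phi0 v) a b) in H2.
match goal with |- ?a = ?b => change (@eq R a b) end.
match type of H2 with ?a = ?b => change (@eq R a b) in H2 end.
lra.
Qed.


Lemma G3a N : RInt phi0 0 N = sqrt 2 * II (N / sqrt 2).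
Proof.
have Hs : 0 < sqrt 2 by apply sqrt_lt_R0; lra.
have Hss : sqrt 2 * sqrt 2 = 2 by apply sqrt_sqrt; lra.
have := RInt_comp_lin phi0 (sqrt 2) 0 0 (N / sqrt 2) (ex_RInt_phi0 _ _).
rewrite (_ : sqrt 2 * 0 + 0 = 0); last ring.
rewrite (_ : sqrt 2 * (N / sqrt 2) + 0 = N); last by field; lra.
move=> <-.
rewrite (RInt_ext _ (fun y => scal (sqrt 2) (gg y))); last first.
  move=> y _; rewrite /phi0 /gg; f_equal; f_equal.
  rewrite (_ : (sqrt 2 * y + 0) ^ 2 = (sqrt 2 * sqrt 2) * y ^ 2); last ring.
  rewrite Hss; field.
rewrite RInt_scal; last apply ex_RInt_gg.
by [].
Qed.

Lemma G3b N : RInt phi0 (- N) 0 = RInt phi0 0 N.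
Proof.
have := RInt_comp_lin phi0 (-1) 0 0 N (ex_RInt_phi0 _ _).
rewrite (_ : -1 * 0 + 0 = 0); last ring.
rewrite (_ : -1 * N + 0 = - N); last ring.
rewrite (RInt_ext _ (fun y => opp (phi0 y))); last first.
  move=> y _; rewrite /scal /= /mult /= (_ : -1 * y + 0 = - y); last ring.
  rewrite phi0_even /opp /=; ring.
rewrite RInt_opp; last apply ex_RInt_phi0.
move=> H; rewrite -opp_RInt_swap; last apply ex_RInt_phi0.
by rewrite -H /opp /= Ropp_involutive.
Qed.

Lemma G3 N : RInt phi0 (- N) N = 2 * sqrt 2 * II (N / sqrt 2).
Proof.
rewrite -(RInt_Chasles phi0 (- N) 0 N); try apply ex_RInt_phi0.
rewrite G3b G3a /plus /=; ring.
Qed.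

Lemma phi0_0 : phi0 0 = 1.
Proof. by rewrite /phi0 (_ : - (0 ^ 2) / 2 = 0) ?exp_0 //; field. Qed.

Lemma G5a b : 0 <= b -> RInt (fun v => Rabs v ^ 3 * phi0 v) 0 b <= 2.
Proof.
move=> Hb.
rewrite (RInt_ext _ (fun v => v ^ 3 * phi0 v)); last first.
  move=> v; rewrite Rmin_left // Rmax_right // => Hv.
  by rewrite Rabs_pos_eq //; lra.
rewrite (is_RInt_unique _ _ _ (minus (- ((b ^ 2 + 2) * phi0 b)) (- ((0 ^ 2 + 2) * phi0 0)))).
  rewrite phi0_0 /minus /plus /opp /=.
  have := phi0_pos b; have : 0 <= b * (b * 1) by nra. nra.
apply: (is_RInt_derive (fun v => - ((v ^ 2 + 2) * phi0 v))) => t _.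
  rewrite /phi0; auto_derive => //.
  change (- (t * (t * 1)) * / 2) with (- (t ^ 2) / 2); Rfield.
apply: ex_derive_continuous; rewrite /phi0; auto_derive => //.
Qed.

Lemma G5b a : 0 <= a -> RInt (fun v => Rabs v ^ 3 * phi0 v) (- a) 0 <= 2.
Proof.
move=> Ha.
rewrite (RInt_ext _ (fun v => - (v ^ 3) * phi0 v)); last first.
  move=> v; rewrite Rmin_left ?Rmax_right; try lra; move=> Hv.
  rewrite Rabs_left; last lra. Rring.
rewrite (is_RInt_unique _ _ _ (minus ((0 ^ 2 + 2) * phi0 0) (((- a) ^ 2 + 2) * phi0 (- a)))).
  rewrite phi0_0 /minus /plus /opp /=.
  have := phi0_pos (- a); have : 0 <= - a * (- a * 1) by nra. nra.
apply: (is_RInt_derive (fun v => (v ^ 2 + 2) * phi0 v)) => t _.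
  rewrite /phi0; auto_derive => //.
  change (- (t * (t * 1)) * / 2) with (- (t ^ 2) / 2); Rfield.
apply: ex_derive_continuous; rewrite /phi0; auto_derive => //.
Qed.
HB.instance Definition _ := Monoid.isComLaw.Build R 0 Rplus (fun a b c => esym (Rplus_assoc a b c)) Rplus_comm Rplus_0_l.

Lemma rsum_plus n (f g : 'I_n -> R) : rsum n (fun i => f i + g i) = rsum n f + rsum n g.
Proof. by rewrite /rsum big_split. Qed.
Lemma rsum_mull n c (f : 'I_n -> R) : c * rsum n f = rsum n (fun i => c * f i).
Proof.
rewrite /rsum; elim/big_rec2: _ => [|i y1 y2 _ <-]; first by rewrite Rmult_0_r.
by rewrite Rmult_plus_distr_l.
Qed.
Lemma rsum_minus n (f g : 'I_n -> R) : rsum n (fun i => f i - g i) = rsum n f - rsum n g.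
Proof. rewrite /Rminus -(Rmult_1_l (rsum n g)) Ropp_mult_distr_l rsum_mull -rsum_plus; apply: eq_bigr => i _; ring. Qed.
Lemma rsum_swap n m (f : 'I_n -> 'I_m -> R) : rsum n (fun i => rsum m (fun j => f i j)) = rsum m (fun j => rsum n (fun i => f i j)).
Proof. by rewrite /rsum exchange_big. Qed.
Lemma rsum_le n (f g : 'I_n -> R) : (forall i, f i <= g i) -> rsum n f <= rsum n g.
Proof. move=> H; rewrite /rsum; elim/big_ind2: _ => *; [lra|lra|by apply H]. Qed.
Lemma rsum_ext n (f g : 'I_n -> R) : (forall i, f i = g i) -> rsum n f = rsum n g.
Proof. by move=> H; rewrite /rsum; apply: eq_bigr => i _. Qed.
Lemma rsum_const n c : rsum n (fun _ => c) = INR n * c.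
Proof. rewrite /rsum big_const card_ord; elim: n => /= [|n ->]; first lra. case: n => /= [|n]; lra. Qed.
Lemma rsum_delta n (f : 'I_n -> R) k : rsum n (fun l => f l * (if k == l then 1 else 0)) = f k.
Proof. rewrite /rsum (bigD1 k) //= eqxx big1 ?Rplus_0_r ?Rmult_1_r // => i /negbTE; rewrite eq_sym => ->; lra. Qed.
Lemma col_orth d (xi : 'I_d -> vec d) : orthonormal xi ->
  forall k l : 'I_d, rsum d (fun i => xi i k * xi i l) = if k == l then 1 else 0.
Proof.
move=> Hor k l.
pose X : 'M[R]_d := (\matrix_(i < d, j < d) xi i j)%R.
have H1 : (X *m X^T = 1%:M)%R.
  apply/matrixP => i j; rewrite !mxE.
  transitivity (inner (xi i) (xi j)).
    rewrite /inner /rsum; apply: eq_bigr => m _; rewrite !mxE //.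
  by rewrite Hor; case: eqP.
have H2 := mulmx1C H1.
have := congr1 (fun A : 'M[R]_d => A k l) H2.
rewrite !mxE /rsum => H3.
transitivity (((k == l)%:R : R))%R; last by case: eqP.
rewrite -H3; apply: eq_bigr => m _; rewrite !mxE //.
Qed.

Lemma inner_ge0 d (a : vec d) : 0 <= inner a a.
Proof.
rewrite /inner; rewrite -(Rmult_0_r (INR d)) -rsum_const; apply rsum_le => i; nra.
Qed.

Lemma comb_expand d (xi : 'I_d -> vec d) (g : vec d) : orthonormal xi ->
  forall k, g k = rsum d (fun i => inner g (xi i) * xi i k).
Proof.
move=> Hor k.
transitivity (rsum d (fun l => g l * rsum d (fun i => xi i l * xi i k))).
  rewrite -(rsum_delta _ g k); apply rsum_ext => l; rewrite col_orth // eq_sym //.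
rewrite /inner.
transitivity (rsum d (fun l => rsum d (fun i => g l * xi i l * xi i k))).
  apply rsum_ext => l; rewrite rsum_mull; apply rsum_ext => i; ring.
rewrite rsum_swap; apply rsum_ext => i.
rewrite Rmult_comm rsum_mull; apply rsum_ext => l; ring.
Qed.

Lemma comb_norm d (xi : 'I_d -> vec d) (c : 'I_d -> R) : orthonormal xi ->
  inner (fun k => rsum d (fun i => c i * xi i k)) (fun k => rsum d (fun i => c i * xi i k))
  = rsum d (fun i => c i ^ 2).
Proof.
move=> Hor; rewrite /inner.
transitivity (rsum d (fun k => rsum d (fun i => rsum d (fun j => c i * c j * (xi i k * xi j k))))).
  apply rsum_ext => k.
  transitivity (rsum d (fun i => c i * xi i k * rsum d (fun j => c j * xi j k))).
    rewrite rsum_mull; apply rsum_ext => i; ring.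
  apply rsum_ext => i; rewrite rsum_mull; apply rsum_ext => j; ring.
rewrite rsum_swap; apply rsum_ext => i.
rewrite rsum_swap.
transitivity (rsum d (fun j => c j * (c i * (if i == j then 1 else 0)))).
  apply rsum_ext => j; rewrite -(Hor i j) /inner rsum_mull rsum_mull; apply rsum_ext => k; ring.
transitivity (rsum d (fun j => (c i * c j) * (if i == j then 1 else 0))).
  apply rsum_ext => j; ring.
rewrite (rsum_delta _ (fun j => c i * c j)); ring.
Qed.


Arguments inner_ge0 {d}.
Lemma inner_scal_r d (a b : vec d) t : inner a (vscale t b) = t * inner a b.
Proof. rewrite /inner rsum_mull; apply rsum_ext => k; rewrite /vscale; ring. Qed.

Lemma inner_sub_l d (a b c : vec d) : inner (vsub a b) c = inner a c - inner b c.
Proof. rewrite /inner -rsum_minus; apply rsum_ext => k; rewrite /vsub; ring. Qed.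

Lemma cs_unit d (a xi : vec d) : inner xi xi = 1 -> Rabs (inner a xi) <= vnorm a.
Proof.
move=> Hu; set c := inner a xi.
have H := inner_ge0 (vsub a (vscale c xi)).
have E : forall c', inner (vsub a (vscale c' xi)) (vsub a (vscale c' xi)) =
   inner a a + (-2 * c') * inner a xi + (c' * c') * inner xi xi.
  move=> c'; rewrite /inner !rsum_mull -!rsum_plus; apply rsum_ext => k; rewrite /vsub /vscale; ring.
rewrite E Hu -/c in H.
rewrite -sqrt_Rsqr_abs /vnorm; apply sqrt_le_1_alt; rewrite /Rsqr; lra.
Qed.

Lemma vnorm_scale_unit d (xi : vec d) t : inner xi xi = 1 -> vnorm (vscale t xi) = Rabs t.
Proof.
move=> Hu; rewrite /vnorm -sqrt_Rsqr_abs; f_equal.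
rewrite /inner /Rsqr -(Rmult_1_r (t * t)) -Hu /inner rsum_mull; apply rsum_ext => k; rewrite /vscale; ring.
Qed.

Lemma vadd_scale d (x xi : vec d) y t : vadd (vadd x (vscale y xi)) (vscale t xi) = vadd x (vscale (y + t) xi).
Proof. apply functional_extensionality => k; rewrite /vadd /vscale; ring. Qed.

Lemma vadd_scale0 d (x xi : vec d) : vadd x (vscale 0 xi) = x.
Proof. apply functional_extensionality => k; rewrite /vadd /vscale; ring. Qed.

Lemma h_deriv d (F : vec d -> R) gF (x xi : vec d) y :
  is_gradient F gF -> inner xi xi = 1 ->
  derivable_pt_lim (fun y => F (vadd x (vscale y xi))) y (inner (gF (vadd x (vscale y xi))) xi).
Proof.
move=> Hg Hu eps Heps.
have [delta [Hd H]] := Hg (vadd x (vscale y xi)) (eps / 2) ltac:(lra).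
exists (mkposreal delta Hd) => t Ht0 Ht /=.
have Hn : vnorm (vscale t xi) < delta by rewrite vnorm_scale_unit.
have := H _ Hn.
rewrite vadd_scale inner_scal_r vnorm_scale_unit //.
set A := F (vadd x (vscale (y + t) xi)); set B := F (vadd x (vscale y xi)).
set l := inner _ xi => H1.
have Hta : 0 < Rabs t by apply Rabs_pos_lt.
have -> : (A - B) / t - l = (A - B - t * l) / t by field.
rewrite Rabs_div // ; apply (Rmult_lt_reg_r (Rabs t)) => //.
rewrite /Rdiv Rmult_assoc Rinv_l; last lra.
rewrite Rmult_1_r; apply (Rle_lt_trans _ _ _ H1); nra.
Qed.

Lemma taylor d (F : vec d -> R) gF L (x xi : vec d) y :
  is_gradient F gF -> grad_lipschitz gF L -> inner xi xi = 1 -> 0 < L ->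
  Rabs (F (vadd x (vscale y xi)) - F x - y * inner (gF x) xi) <= L * y ^ 2.
Proof.
move=> Hg Hl Hu HL.
set s := inner (gF x) xi.
pose k := fun y => F (vadd x (vscale y xi)) - (F x + y * s).
have Hk : forall c, derivable_pt_lim k c (inner (gF (vadd x (vscale c xi))) xi - s).
  move=> c; apply derivable_pt_lim_minus; first by apply h_deriv.
  apply is_derive_Reals; auto_derive => //; Rring.
have Hb : forall c, Rabs (inner (gF (vadd x (vscale c xi))) xi - s) <= L * Rabs c.
  move=> c; rewrite /s -inner_sub_l.
  apply Rle_trans with (vnorm (vsub (gF (vadd x (vscale c xi))) (gF x))); first by apply cs_unit.
  by rewrite -(vnorm_scale_unit _ _ c Hu); apply Hl.
have Hk0 : k 0 = 0 by rewrite /k vadd_scale0; ring.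
have -> : F (vadd x (vscale y xi)) - F x - y * s = k y by rewrite /k; ring.
case: (Rtotal_order 0 y) => [Hy|[<-|Hy]].
- have [c [Hc Hc2]] := MVT_cor2 k _ 0 y Hy (fun c _ => Hk c).
  rewrite Hk0 !Rminus_0_r in Hc; rewrite Hc Rabs_mult (Rabs_pos_eq y); last lra.
  have := Hb c; rewrite (Rabs_pos_eq c); last lra.
  move=> H; apply Rle_trans with (L * c * y); first by apply Rmult_le_compat_r; lra.
  rewrite Rmult_assoc; apply Rmult_le_compat_l; [lra|]; rewrite /= Rmult_1_r; apply Rmult_le_compat_r; lra.
- rewrite Hk0 Rabs_R0; clear -HL; nra.
- have [c [Hc Hc2]] := MVT_cor2 k _ y 0 Hy (fun c _ => Hk c).
  rewrite Hk0 in Hc.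
  have -> : k y = - (0 - k y) by ring.
  rewrite Rabs_Ropp Hc Rabs_mult (Rabs_pos_eq (0 - y)); last lra.
  have := Hb c; rewrite (Rabs_left c); last lra.
  move=> H; apply Rle_trans with (L * (- c) * (0 - y)); first by apply Rmult_le_compat_r; lra.
  rewrite Rmult_assoc; apply Rmult_le_compat_l; [lra|]; rewrite /= Rmult_1_r; replace (y * y) with ((0 - y) * (0 - y)) by ring; apply Rmult_le_compat_r; lra.
Qed.

Lemma le_1sq x : x <= 1 + x ^ 2.
Proof. nra. Qed.

Lemma eps_le X Y Z : 0 <= Z -> (forall eps, 0 < eps -> X <= Y + eps * Z) -> X <= Y.
Proof.
move=> HZ H; case: (Rle_or_lt X Y) => // HXY.
have He : 0 < (X - Y) / (Z + 1) by apply Rdiv_lt_0_compat; lra.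
have := H _ He.
have : (X - Y) / (Z + 1) * Z < X - Y.
  apply (Rmult_lt_reg_r (Z + 1)); first lra.
  rewrite (_ : (X - Y) / (Z + 1) * Z * (Z + 1) = (X - Y) * Z); last by field; lra.
  nra.
lra.
Qed.

Lemma Nphi0 N : 0 < N -> N * phi0 N <= 2 / N.
Proof.
move=> HN.
have H1 : phi0 N <= / (1 + N ^ 2 / 2).
  rewrite /phi0 (_ : - (N ^ 2) / 2 = - (N ^ 2 / 2)); last field.
  rewrite exp_Ropp; apply Rinv_le_contravar; first (have : 0 <= N ^ 2 by nra); try nra.
  apply exp_ineq1_le.
have H2 : 0 < 1 + N ^ 2 / 2 by nra.
apply Rle_trans with (N * / (1 + N ^ 2 / 2)).
  apply Rmult_le_compat_l; lra.
apply (Rmult_le_reg_r (N * (1 + N ^ 2 / 2))); first nra.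
rewrite (_ : N * / (1 + N ^ 2 / 2) * (N * (1 + N ^ 2 / 2)) = N * N); last by field; lra.
rewrite (_ : 2 / N * (N * (1 + N ^ 2 / 2)) = 2 + N ^ 2); last by field; lra.
simpl; nra.
Qed.

Lemma abs3_cont v : continuous (fun v => Rabs v ^ 3 * phi0 v) v.
Proof.
apply: (continuous_mult (fun v => Rabs v ^ 3) phi0); last apply phi0_cont.
apply: (continuous_comp Rabs (fun y => y ^ 3)); first apply continuous_Rabs.
apply: ex_derive_continuous; auto_derive => //.
Qed.

Lemma ex_RInt_abs3 a b : ex_RInt (fun v => Rabs v ^ 3 * phi0 v) a b.
Proof. apply: ex_RInt_continuous => z _; apply abs3_cont. Qed.

Lemma G5 N : 0 <= N -> RInt (fun v => Rabs v ^ 3 * phi0 v) (- N) N <= 4.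
Proof.
move=> HN; rewrite -(RInt_Chasles _ (- N) 0 N); try apply ex_RInt_abs3.
have := G5a _ HN; have := G5b _ HN; rewrite /plus /=; lra.
Qed.

Lemma dir_core (k : R -> R) h0 s L sigma e :
  0 < L -> 0 < sigma ->
  (forall y, Rabs (k y) <= L * y ^ 2) ->
  gauss_expect (fun v => (h0 + sigma * v * s + k (sigma * v)) * v) e ->
  Rabs (e - sigma * s) <= 4 * L * sigma ^ 2.
Proof.
move=> HL Hs Hk [pr Hlim].
set c := sqrt (2 * PI).
have HPI := PI_RGT_0.
have HPI1 := PI2_1.
have Hc : 0 < c by apply sqrt_lt_R0; lra.
have Hc1 : 1 <= c by rewrite /c -sqrt_1; apply sqrt_le_1_alt; lra.
have Hsq2 : 0 < sqrt 2 by apply sqrt_lt_R0; lra.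
set sp := sqrt PI / 2.
have Hsp : 0 < sp by rewrite /sp; have := sqrt_lt_R0 _ HPI; lra.
have Hcsp : c = 2 * sqrt 2 * sp by rewrite /c /sp sqrt_mult; [field|lra|lra].
set Z := 1 + (sigma * Rabs s / c) * (2 * sqrt 2 + 2).
have HZ : 0 <= Z.
  rewrite /Z; have := Rabs_pos s => Ha.
  have : 0 <= sigma * Rabs s / c by apply Rmult_le_pos; [nra|apply Rlt_le, Rinv_0_lt_compat; lra].
  nra.
suff H : Rabs (e - sigma * s) <= 4 * L * sigma ^ 2 / c.
  apply (Rle_trans _ _ _ H).
  have Hp : 0 <= 4 * L * sigma ^ 2 by apply Rmult_le_pos; [lra | apply pow_le; lra].
  rewrite /Rdiv; rewrite -{2}(Rmult_1_r (4 * L * sigma ^ 2)); apply Rmult_le_compat_l => //.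
  rewrite -Rinv_1; apply Rinv_le_contravar; lra.
apply (eps_le _ _ _ HZ) => eps Heps.
have [N0 HN0] := Hlim eps Heps.
set N := Rmax (Rmax N0 1) (Rmax (2 / eps) (sqrt 2 / (eps * sp))).
have HN1 : N0 <= N by apply (Rle_trans _ _ _ (Rmax_l N0 1)), Rmax_l.
have HN2 : 1 <= N by apply (Rle_trans _ _ _ (Rmax_r N0 1)), Rmax_l.
have HN3 : 2 / eps <= N by apply (Rle_trans _ (Rmax (2 / eps) (sqrt 2 / (eps * sp)))); [apply Rmax_l|apply Rmax_r].
have HN4 : sqrt 2 / (eps * sp) <= N by apply (Rle_trans _ (Rmax (2 / eps) (sqrt 2 / (eps * sp)))); [apply Rmax_r|apply Rmax_r].
have HT := HN0 N N HN1 HN1.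
rewrite -RInt_Reals in HT.
set f := fun v => (h0 + sigma * v * s + k (sigma * v)) * v * (exp (- v ^ 2 / 2) / sqrt (2 * PI)) in HT.
set Kf := fun v => k (sigma * v) * v * (phi0 v / c).
set P := fun v => (h0 / c) * (v * phi0 v) + (sigma * s / c) * (v ^ 2 * phi0 v).
have Hc0 : c <> 0 by lra.
have Hf : forall v, f v = P v + Kf v.
  move=> v; rewrite /f /P /Kf /phi0 -/c; field; lra.
have ex_f : ex_RInt f (- N) N := ex_RInt_Reals_1 _ _ _ (pr (- N) N).
have ex_1 : ex_RInt (fun v => v * phi0 v) (- N) N.
  apply: ex_RInt_continuous => z _; apply: ex_derive_continuous; rewrite /phi0; auto_derive => //.
have ex_2 : ex_RInt (fun v => v ^ 2 * phi0 v) (- N) N.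
  apply: ex_RInt_continuous => z _; apply: ex_derive_continuous; rewrite /phi0; auto_derive => //.
have ex_P : ex_RInt P (- N) N.
  apply: (ex_RInt_ext (fun v => plus (scal (h0 / c) (v * phi0 v)) (scal (sigma * s / c) (v ^ 2 * phi0 v)))) => //.
  apply: ex_RInt_plus; apply: ex_RInt_scal => //.
have ex_K : ex_RInt Kf (- N) N.
  apply: (ex_RInt_ext (fun v => minus (f v) (P v))); last by apply: ex_RInt_minus.
  move=> v _; rewrite Hf /minus /plus /opp /=; ring.
have HRf : RInt f (- N) N = RInt P (- N) N + RInt Kf (- N) N.
  rewrite (RInt_ext f (fun v => plus (P v) (Kf v))); last by move=> v _; rewrite Hf.
  by rewrite RInt_plus.
have HRP : RInt P (- N) N = (sigma * s / c) * (2 * sqrt 2 * II (N / sqrt 2) - 2 * (N * phi0 N)).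
  rewrite (RInt_ext P (fun v => plus (scal (h0 / c) (v * phi0 v)) (scal (sigma * s / c) (v ^ 2 * phi0 v)))) //.
  rewrite RInt_plus; try (apply: ex_RInt_scal => //).
  rewrite !RInt_scal // G1 G2 G3 phi0_even /plus /scal /= /mult /=; ring.
have HN0' : 0 <= N by lra.
have HK : Rabs (RInt Kf (- N) N) <= 4 * L * sigma ^ 2 / c.
  set a := L * sigma ^ 2 / c.
  have Ha : 0 <= a by rewrite /a; apply Rmult_le_pos; [apply Rmult_le_pos; [lra|apply pow_le; lra]|apply Rlt_le, Rinv_0_lt_compat; lra].
  have ex_B : ex_RInt (fun v => scal a (Rabs v ^ 3 * phi0 v)) (- N) N.
    apply: ex_RInt_scal; apply ex_RInt_abs3.
  have HB : RInt (fun v => scal a (Rabs v ^ 3 * phi0 v)) (- N) N <= 4 * a.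
    rewrite RInt_scal; last apply ex_RInt_abs3.
    change (scal a (RInt (fun v => Rabs v ^ 3 * phi0 v) (- N) N)) with (a * RInt (fun v => Rabs v ^ 3 * phi0 v) (- N) N).
    rewrite (Rmult_comm 4); apply Rmult_le_compat_l => //; apply G5; lra.
  have Hpt : forall v, Rabs (Kf v) <= a * (Rabs v ^ 3 * phi0 v).
    move=> v; rewrite /Kf /a.
    have Hph := phi0_pos v.
    rewrite Rabs_mult (Rabs_pos_eq (phi0 v / c)); last by apply Rlt_le, Rdiv_lt_0_compat.
    rewrite Rabs_mult.
    have H1 := Hk (sigma * v).
    have H2 : (sigma * v) ^ 2 = sigma ^ 2 * Rabs v ^ 2 by rewrite pow2_abs; ring.
    rewrite H2 in H1.
    have H3 : 0 <= Rabs v * (phi0 v / c) by apply Rmult_le_pos; [apply Rabs_pos|apply Rlt_le, Rdiv_lt_0_compat].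
    apply Rle_trans with (L * (sigma ^ 2 * Rabs v ^ 2) * (Rabs v * (phi0 v / c))).
      rewrite Rmult_assoc; apply Rmult_le_compat_r => //.
    apply Req_le; field; lra.
  have Hup : RInt Kf (- N) N <= RInt (fun v => scal a (Rabs v ^ 3 * phi0 v)) (- N) N.
    apply RInt_le => //; first lra.
    move=> v _; have := Hpt v; rewrite /scal /= /mult /=; move/Rabs_le_between => [] //.
  have Hlo : RInt (fun v => opp (scal a (Rabs v ^ 3 * phi0 v))) (- N) N <= RInt Kf (- N) N.
    apply RInt_le => //; first lra.
      by apply: ex_RInt_opp.
    move=> v _; have := Hpt v; rewrite /opp /scal /= /mult /=; move/Rabs_le_between => [] //.
  rewrite RInt_opp // in Hlo.
  have Hlo' : - RInt (fun v => scal a (Rabs v ^ 3 * phi0 v)) (- N) N <= RInt Kf (- N) N by exact Hlo.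
  apply Rabs_le_between; split.
    rewrite (_ : - (4 * L * sigma ^ 2 / c) = - (4 * a)); [lra|rewrite /a; field; lra].
  rewrite (_ : 4 * L * sigma ^ 2 / c = 4 * a); [lra|rewrite /a; field; lra].
set X := N / sqrt 2.
have HX : 0 < X by rewrite /X; apply Rdiv_lt_0_compat; lra.
have HII : Rabs (II X - sp) <= eps.
  have H0 := II_lim X (Rlt_le _ _ HX); rewrite -/sp in H0.
  have H1 : / (1 + X ^ 2) <= / X by apply Rinv_le_contravar => //; apply le_1sq.
  have H2 : / X = sqrt 2 / N by rewrite /X; field; lra.
  have H3 : sqrt 2 / N <= eps * sp.
    have : sqrt 2 <= N * (eps * sp).
      rewrite (_ : sqrt 2 = sqrt 2 / (eps * sp) * (eps * sp)); last by field; lra.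
      apply Rmult_le_compat_r => //; apply Rlt_le, Rmult_lt_0_compat; lra.
    move=> H; apply (Rmult_le_reg_r N); first lra.
    rewrite (_ : sqrt 2 / N * N = sqrt 2); [lra|field; lra].
  apply (Rmult_le_reg_r sp) => //; lra.
have HNp : N * phi0 N <= eps.
  apply (Rle_trans _ _ _ (Nphi0 N ltac:(lra))).
  apply (Rmult_le_reg_r N); first lra.
  rewrite (_ : 2 / N * N = 2); last by field; lra.
  apply (Rle_trans _ (2 / eps * eps)); first by right; field; lra.
  rewrite (Rmult_comm eps N); apply Rmult_le_compat_r; lra.
have Hdec : RInt f (- N) N - sigma * s = (sigma * s / c) * (2 * sqrt 2 * (II X - sp) - 2 * (N * phi0 N)) + RInt Kf (- N) N.
  rewrite HRf HRP -/X Hcsp; Rfield; lra.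
have HA : Rabs (2 * sqrt 2 * (II X - sp) - 2 * (N * phi0 N)) <= (2 * sqrt 2 + 2) * eps.
  have Hnp : 0 <= N * phi0 N by apply Rmult_le_pos; [lra|apply Rlt_le, phi0_pos].
  apply Rle_trans with (Rabs (2 * sqrt 2 * (II X - sp)) + Rabs (- (2 * (N * phi0 N)))).
    apply Rabs_triang.
  rewrite Rabs_Ropp Rabs_mult (Rabs_pos_eq (2 * sqrt 2)); last lra.
  rewrite (Rabs_pos_eq (2 * (N * phi0 N))); last lra.
  have : sqrt 2 * Rabs (II X - sp) <= sqrt 2 * eps by apply Rmult_le_compat_l; lra.
  lra.
set A := 2 * sqrt 2 * (II X - sp) - 2 * (N * phi0 N) in HA Hdec.
have HS : Rabs (sigma * s / c * A) <= sigma * Rabs s / c * ((2 * sqrt 2 + 2) * eps).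
  have -> : sigma * s / c * A = (sigma / c) * (s * A) by field.
  have -> : sigma * Rabs s / c * ((2 * sqrt 2 + 2) * eps) = (sigma / c) * (Rabs s * ((2 * sqrt 2 + 2) * eps)) by field.
  rewrite Rabs_mult (Rabs_pos_eq (sigma / c)); last by apply Rlt_le, Rdiv_lt_0_compat.
  apply Rmult_le_compat_l; first by apply Rlt_le, Rdiv_lt_0_compat.
  rewrite Rabs_mult; apply Rmult_le_compat_l => //; apply Rabs_pos.
have -> : e - sigma * s = - (RInt f (- N) N - e) + (RInt f (- N) N - sigma * s) by ring.
apply (Rle_trans _ _ _ (Rabs_triang _ _)).
rewrite Rabs_Ropp Hdec.
have := Rabs_triang (sigma * s / c * A) (RInt Kf (- N) N).
rewrite /Z.
lra.
Qed.

Lemma dir_bound d (F : vec d -> R) gF L (xi : vec d) sigma x Dv :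
  is_gradient F gF -> 0 < L -> grad_lipschitz gF L -> inner xi xi = 1 -> 0 < sigma ->
  is_smoothed_dirderiv F x xi sigma Dv -> Rabs (Dv - inner (gF x) xi) <= 4 * L * sigma.
Proof.
move=> Hg HL Hl Hu Hs [e [He ->]].
set s := inner (gF x) xi; set h0 := F x.
pose k := fun y => F (vadd x (vscale y xi)) - h0 - y * s.
have Hk : forall y, Rabs (k y) <= L * y ^ 2.
  move=> y; rewrite /k /h0 /s; apply taylor => //.
have He' : gauss_expect (fun v => (h0 + sigma * v * s + k (sigma * v)) * v) e.
  have -> : (fun v => (h0 + sigma * v * s + k (sigma * v)) * v) = (fun v => Gdir F x xi (sigma * v) * v) => //.
  apply functional_extensionality => v; rewrite /k /Gdir; ring.
have H := dir_core k h0 s L sigma e HL Hs Hk He'.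
have -> : / sigma * e - s = (e - sigma * s) / sigma by field; lra.
rewrite Rabs_div; last lra.
rewrite (Rabs_pos_eq sigma); last lra.
apply (Rmult_le_reg_r sigma) => //.
rewrite (_ : Rabs (e - sigma * s) / sigma * sigma = Rabs (e - sigma * s)); last by field; lra.
rewrite (_ : 4 * L * sigma * sigma = 4 * L * sigma ^ 2) //; ring.
Qed.

Theorem proposition1 (d : nat) (F : vec d -> R) (gF : vec d -> vec d) (L : R)
  (xi : 'I_d -> vec d) (sigma : R) (M : nat) (C : R) (x : vec d)
  (v : 'I_M -> R) (D : 'I_d -> R) :
  is_gradient F gF -> 0 < L -> grad_lipschitz gF L ->
  orthonormal xi -> 0 < sigma -> (1 <= M)%nat -> 0 < C ->
  GH_nodes M v ->
  (forall i : 'I_d, is_smoothed_dirderiv F x (xi i) sigma (D i)) ->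
  (forall i : 'I_d,
     Rabs (GH_est F x (xi i) sigma M v - D i)
       <= C * (INR (fact M) * sqrt PI / (2 ^ M * INR (fact (2 * M)%nat)))
            * sigma ^ (2 * M - 1)%nat) ->
  (vnorm (vsub (DGS F x sigma M v xi) (gF x))) ^ 2
    <= 2 * C ^ 2 * PI * INR d * (INR (fact M)) ^ 2
         / (4 ^ M * (INR (fact (2 * M)%nat)) ^ 2) * sigma ^ (4 * M - 2)%nat
       + 32 * INR d * L ^ 2 * sigma ^ 2.
Proof.
move=> Hg HL Hlip Hor Hs HM HC _ HD HE.
set E := C * _ * _ in HE.
set g := gF x.
set a := fun i => GH_est F x (xi i) sigma M v.
have Hw : vsub (DGS F x sigma M v xi) g =
   (fun k => rsum d (fun i => ((a i - D i) + (D i - inner g (xi i))) * xi i k)).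
  apply functional_extensionality => k.
  rewrite /vsub /DGS (comb_expand _ _ g Hor k) -rsum_minus.
  apply rsum_ext => i; rewrite /a; ring.
rewrite Hw /vnorm pow2_sqrt; last by apply inner_ge0.
rewrite comb_norm //.
have Hb : forall i, ((a i - D i) + (D i - inner g (xi i))) ^ 2 <= 2 * E ^ 2 + 2 * (4 * L * sigma) ^ 2.
  move=> i.
  have Hu : inner (xi i) (xi i) = 1 by rewrite Hor eqxx.
  have H1 := HE i; have H2 := dir_bound _ _ _ _ _ _ _ _ Hg HL Hlip Hu Hs (HD i).
  rewrite /a; move: H1 H2; set p := GH_est _ _ _ _ _ _ - _; set q := D i - _.
  move=> H1 H2.
  have H3 : p ^ 2 <= E ^ 2.
    rewrite -(pow2_abs p); apply pow_incr; split; [apply Rabs_pos|exact H1].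
  have H4 : q ^ 2 <= (4 * L * sigma) ^ 2.
    rewrite -(pow2_abs q); apply pow_incr; split; [apply Rabs_pos|exact H2].
  replace ((p+q)^2) with (2*p^2+2*q^2 - (p-q)^2) by ring; have := pow2_ge_0 (p-q); lra.
apply Rle_trans with (rsum d (fun _ => 2 * E ^ 2 + 2 * (4 * L * sigma) ^ 2)).
  by apply rsum_le.
rewrite rsum_const.
have HE2 : E ^ 2 = C ^ 2 * PI * INR (fact M) ^ 2 / (4 ^ M * INR (fact (2 * M)) ^ 2) * sigma ^ (4 * M - 2).
  rewrite /E.
  have HM2 : (1 <= M)%coq_nat by apply/leP.
  have -> : (4 * M - 2 = (2 * M - 1) * 2)%nat by rewrite -!minusE -!multE; lia.
  rewrite pow_mult.
  have -> : 4 ^ M = 2 ^ M * 2 ^ M by rewrite -Rpow_mult_distr; f_equal; ring.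
  have HP : sqrt PI ^ 2 = PI by rewrite pow2_sqrt //; apply Rlt_le, PI_RGT_0.
  have Hf1 : INR (fact (2 * M)) <> 0 by apply not_0_INR, fact_neq_0.
  have H2 : 2 ^ M <> 0 by apply pow_nonzero; lra.
  rewrite -[in RHS]HP. field; auto.
rewrite HE2; apply Req_le; rewrite /Rdiv; set T := / _; set U := sigma ^ _; ring.
Qed.
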